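(* For every tournament $T$, $\Delta(T)\le |F|$, where $F$ is a minimum feedback arc set of $T$.
   Context: A tournament is a digraph with exactly one arc between each pair of distinct vertices. A feedback arc set is a set of arcs whose removal makes the digraph acyclic. For an ordering $\sigma$ of $V(T)$, an arc $(x,y)$ is backward if $y$ precedes $x$; $d_\sigma(v)$ is the number of backward arcs incident to $v$, $\Delta_\sigma(T)=\max_v d_\sigma(v)$, and the degreewidth is $\Delta(T)=\min_\sigma\Delta_\sigma(T)$. *)

(* Defs.v *)
From mathcomp Require Import all_boot.
Set Implicit Arguments. Unset Strict Implicit. Unset Printing Implicit Defensive.

Definition tournament (V : finType) (arc : rel V) : Prop :=
  (forall x, ~~ arc x x) /\
  (forall x y, x != y -> (arc x y && ~~ arc y x) || (arc y x && ~~ arc x y)).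

Definition acyclic (V : finType) (e : rel V) : Prop :=
  forall x y, e x y -> ~~ connect e y x.

Definition remove_arcs (V : finType) (arc : rel V) (F : {set V * V}) : rel V :=
  fun x y => arc x y && ((x, y) \notin F).

Definition feedback_arc_set (V : finType) (arc : rel V) (F : {set V * V}) : Prop :=
  (forall p, p \in F -> arc p.1 p.2) /\ acyclic (remove_arcs arc F).

Definition min_feedback_arc_set (V : finType) (arc : rel V) (F : {set V * V}) : Prop :=
  feedback_arc_set arc F /\
  (forall F' : {set V * V}, feedback_arc_set arc F' -> #|F| <= #|F'|).

(* An ordering of V: a bijection sigma : V -> 'I_#|V| (position of each vertex). *)
Definition ordering (V : finType) (sigma : V -> 'I_#|V|) : Prop := bijective sigma.

Definition backward (V : finType) (arc : rel V) (sigma : V -> 'I_#|V|) (x y : V) : bool :=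
  arc x y && (sigma y < sigma x).

Definition back_deg (V : finType) (arc : rel V) (sigma : V -> 'I_#|V|) (v : V) : nat :=
  #|[set p : V * V | backward arc sigma p.1 p.2 && ((p.1 == v) || (p.2 == v))]|.

Definition Delta_sigma (V : finType) (arc : rel V) (sigma : V -> 'I_#|V|) : nat :=
  \max_(v : V) back_deg arc sigma v.

(* Orderings are enumerated as injective finite functions V -> 'I_#|V| (= bijections).
   The neutral element #|V * V| of minn is an upper bound on every Delta_sigma (each
   back_deg counts a subset of V * V), and the range is nonempty, so it never matters. *)
Definition degreewidth (V : finType) (arc : rel V) : nat :=
  \big[minn/#|{: V * V}|]_(s : {ffun V -> 'I_#|V|} | injectiveb s) Delta_sigma arc s.

(* Main.v *)
Require Import Defs.
From mathcomp Require Import all_boot.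

Lemma bigmin_le_seq (I : eqType) (r : seq I) (P : pred I) (G : I -> nat) x0 j :
  j \in r -> P j -> \big[minn/x0]_(i <- r | P i) G i <= G j.
Proof.
elim: r => // a r IH; rewrite inE big_cons => /orP [/eqP <- Pj|jr Pj].
  by rewrite Pj geq_minl.
case: (P a); last exact: IH.
by apply: leq_trans (geq_minr _ _) (IH jr Pj).
Qed.

Theorem mainTheorem19 (V : finType) (arc : rel V) (F : {set V * V}) :
  tournament arc -> min_feedback_arc_set arc F ->
  degreewidth arc <= #|F|.
Proof.
move=> _ [[_ Hac] _].
set e := remove_arcs arc F.
pose key x := #|[set z | connect e z x]|.
have Hkey : forall x y, e x y -> key x < key y.
  move=> x y exy; apply: proper_card; apply/properP; split.
    apply/subsetP => z; rewrite !inE => zx.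
    by apply: connect_trans zx (connect1 exy).
  exists y; first by rewrite inE connect0.
  by rewrite inE; apply: Hac.
pose leT := fun a b => key a <= key b.
pose s := sort leT (enum V).
have Hsz : size s = #|V| by rewrite size_sort cardE.
have Hin : forall x, x \in s by move=> x; rewrite mem_sort mem_enum.
have Hu : uniq s by rewrite sort_uniq enum_uniq.
have Hs : sorted leT s.
  apply: sort_sorted => a b; rewrite /leT; exact: leq_total.
have H : forall x, index x s < #|V| by move=> x; rewrite -Hsz index_mem.
pose sig : {ffun V -> 'I_#|V|} := [ffun x => Ordinal (H x)].
have Hord : forall x y, e x y -> sig x < sig y.
  move=> x y exy; rewrite !ffunE /=; rewrite ltnNge; apply/negP => Hle.
  have Htr : transitive leT by move=> a b c; rewrite /leT; apply: leq_trans.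
  have Hrf : reflexive leT by move=> a; rewrite /leT.
  have := sorted_leq_nth Htr Hrf x Hs.
  move=> /(_ (index y s) (index x s)); rewrite !inE !index_mem !Hin.
  move=> /(_ isT isT Hle); rewrite !nth_index // /leT => Hk.
  by have := Hkey _ _ exy; rewrite ltnNge Hk.
have Hinj : injectiveb sig.
  apply/injectiveP => a b; rewrite !ffunE => /(congr1 val) /= Hi.
  by rewrite -(nth_index a (Hin a)) Hi nth_index.
rewrite /degreewidth; have Hb := @bigmin_le_seq _ _ (fun s0 : {ffun V -> 'I_#|V|} => injectiveb s0) (fun s0 : {ffun V -> 'I_#|V|} => Delta_sigma arc s0) #|{: V * V}| _ (mem_index_enum sig) Hinj.
apply: leq_trans Hb _.
rewrite /Delta_sigma; apply/bigmax_leqP => v _.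
apply: subset_leq_card; apply/subsetP => p; rewrite inE => /andP [].
rewrite /backward => /andP [ap Hlt] _.
apply/negPn/negP => pF.
have ep : e p.1 p.2 by rewrite /e /remove_arcs ap -surjective_pairing pF.
by have := Hord _ _ ep; rewrite ltnNge (ltnW Hlt).
Qed.
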